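(* Let $\mu\in\mathcal P_2(\mathbb R^d)$, $N\ge1$ and let $\Gamma_{2,N}$ be a quadratic optimal $N$-quantizer of $\mu$. Then for any probability measure $\nu$ on $\mathbb R^d$ such that $\hat\mu^{\Gamma_{2,N}}\le_{cvx}\nu\le_{cvx}\mu$, $\Gamma_{2,N}$ is a quadratic optimal $N$-quantizer of $\nu$ and $\hat\nu^{\Gamma_{2,N}}=\hat\mu^{\Gamma_{2,N}}$.
   Context: $\mu\le_{cvx}\nu$ means $\int\varphi\,d\mu\le\int\varphi\,d\nu$ for all convex $\varphi:\mathbb R^d\to\mathbb R$. A quadratic optimal $N$-quantizer of a probability measure $\mu$ with finite second moment is a set $\Gamma\subset\mathbb R^d$ with $|\Gamma|\le N$ minimizing $\int\mathrm{dist}(x,\Gamma)^2\mu(dx)$ over all such sets. For such $\Gamma$, $\hat\mu^\Gamma=\mu\circ\mathrm{Proj}_\Gamma^{-1}$ where $\mathrm{Proj}_\Gamma:\mathbb R^d\to\Gamma$ is any Borel map with $|x-\mathrm{Proj}_\Gamma(x)|=\mathrm{dist}(x,\Gamma)$ (the image does not depend on the choice). *)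

(* Defs.v *)
From HB Require Import structures.
From mathcomp Require Import all_boot all_order all_algebra finmap.
From mathcomp Require Import all_classical all_reals all_analysis.
Set Implicit Arguments. Unset Strict Implicit. Unset Printing Implicit Defensive.
Import Order.TTheory GRing.Theory Num.Theory.
Import numFieldNormedType.Exports.
Local Open Scope classical_set_scope.
Local Open Scope ring_scope.

(* R^d is represented by row vectors 'rV[R]_d, with the Borel sigma-algebra
   (generated by the open sets of its standard (product = Euclidean) topology). *)
Definition Rd (R : realType) (d : nat) : Type :=
  g_sigma_algebraType (@open 'rV[R]_d).

HB.instance Definition _ (R : realType) (d : nat) :=
  Measurable.on (Rd R d).

Definition sqdist (R : realType) (d : nat) (x y : 'rV[R]_d) : R :=
  \sum_(i < d) (x ord0 i - y ord0 i) ^+ 2.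

Definition sqnorm (R : realType) (d : nat) (x : 'rV[R]_d) : R :=
  \sum_(i < d) (x ord0 i) ^+ 2.

(* dist(x, Gamma)^2 (= +oo when Gamma is empty) *)
Definition dist2 (R : realType) (d : nat) (G : {fset 'rV[R]_d}) (x : 'rV[R]_d)
  : \bar R :=
  ereal_inf [set (sqdist x a)%:E | a in [set a | a \in G]].

Definition distortion (R : realType) (d : nat) (mu : set (Rd R d) -> \bar R)
  (G : {fset 'rV[R]_d}) : \bar R :=
  (\int[mu]_x dist2 G x)%E.

Definition opt_quantizer (R : realType) (d : nat) (mu : set (Rd R d) -> \bar R)
  (N : nat) (G : {fset 'rV[R]_d}) : Prop :=
  (#|` G| <= N)%N /\
  forall G' : {fset 'rV[R]_d}, (#|` G'| <= N)%N ->
    (distortion mu G <= distortion mu G')%E.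

Definition finite_second_moment (R : realType) (d : nat)
  (mu : set (Rd R d) -> \bar R) : Prop :=
  (\int[mu]_x (sqnorm x)%:E < +oo)%E.

Definition cvx_le (R : realType) (d : nat) (mu nu : set (Rd R d) -> \bar R)
  : Prop :=
  forall phi : 'rV[R]_d -> R, convex_function setT phi ->
    (\int[mu]_x (phi x)%:E <= \int[nu]_x (phi x)%:E)%E.

Definition nearest_proj (R : realType) (d : nat) (G : {fset 'rV[R]_d})
  (p : 'rV[R]_d -> 'rV[R]_d) : Prop :=
  forall x, p x \in G /\ forall a, a \in G -> sqdist x (p x) <= sqdist x a.

(* Main.v *)
Require Import Defs.
From HB Require Import structures.
From mathcomp Require Import all_boot all_order all_algebra finmap.
From mathcomp Require Import all_classical all_reals all_analysis.
From mathcomp Require Import ring lra measurable_realfun lebesgue_integrable.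
Set Implicit Arguments. Unset Strict Implicit. Unset Printing Implicit Defensive.
Import Order.TTheory GRing.Theory Num.Theory.
Import numFieldNormedType.Exports.
Local Open Scope classical_set_scope.
Local Open Scope ring_scope.

Section Alg.
Variables (R : realType) (d : nat).
Implicit Types x y a b : 'rV[R]_d.

Definition ip x y : R := \sum_(i < d) x ord0 i * y ord0 i.
Definition ell b x : R := 2 * ip x b - sqnorm b.

Lemma sqdistE x b : sqdist x b = sqnorm x - ell b x.
Proof.
rewrite /sqdist /sqnorm /ell /ip mulr_sumr -!sumrB; apply: eq_bigr => i _; ring.
Qed.

Lemma sqnorm_ge0 x : 0 <= sqnorm x.
Proof. by apply: sumr_ge0 => i _; exact: sqr_ge0. Qed.

Lemma sqdist_ge0 x y : 0 <= sqdist x y.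
Proof. by apply: sumr_ge0 => i _; exact: sqr_ge0. Qed.

Lemma sqdist_eq0 x y : sqdist x y = 0 -> x = y.
Proof.
move=> /eqP; rewrite psumr_eq0; last by move=> i _; exact: sqr_ge0.
move=> /allP H; apply/rowP => j; rewrite [ord0]ord1 in H.
have := H j (mem_index_enum _); rewrite sqrf_eq0 subr_eq0 => /eqP.
by [].
Qed.

Lemma sqdistxx x : sqdist x x = 0.
Proof. by rewrite /sqdist big1 // => i _; rewrite subrr expr0n. Qed.

Lemma coord_le_sqnorm x i : (x ord0 i) ^+ 2 <= sqnorm x.
Proof.
rewrite /sqnorm (bigD1 i) //= lerDl; apply: sumr_ge0 => j _; exact: sqr_ge0.
Qed.

Lemma ip_bound x y : `|ip x y| <= sqnorm x + sqnorm y.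
Proof.
rewrite /ip /sqnorm -big_split /=; apply: (le_trans (ler_norm_sum _ _ _)).
apply: ler_sum => i _; rewrite normrM -(real_normK (num_real (x ord0 i))).
rewrite -(real_normK (num_real (y ord0 i))).
have := normr_ge0 (x ord0 i); have := normr_ge0 (y ord0 i); nra.
Qed.

Lemma ipDZ (t s : R) x y b : ip (t *: x + s *: y) b = t * ip x b + s * ip y b.
Proof.
rewrite /ip !mulr_sumr -big_split; apply: eq_bigr => i _; by rewrite !mxE /= mulrDl !mulrA.
Qed.

Lemma ell_affine (t : R) x y b :
  ell b (t *: x + (1 - t) *: y) = t * ell b x + (1 - t) * ell b y.
Proof. rewrite /ell ipDZ; ring. Qed.

Lemma ell_le_sqnorm b x : ell b x <= sqnorm x.
Proof. have := sqdist_ge0 x b; rewrite sqdistE; lra. Qed.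

Lemma ell_self b : ell b b = sqnorm b.
Proof. have := sqdistxx b; rewrite sqdistE; lra. Qed.

Lemma ell_bound b x : `|ell b x| <= 2 * sqnorm x + 3 * sqnorm b.
Proof.
rewrite /ell; have := ip_bound x b; have := sqnorm_ge0 b; have := sqnorm_ge0 x.
move: (ip x b) (sqnorm x) (sqnorm b) => u v w h1 h2 h3.
apply: (le_trans (ler_normB _ _)); rewrite normrM (ger0_norm h2) ger0_norm //.
lra.
Qed.

Section bmax.
Variables (T : eqType) (F : T -> R).
Definition bmax (z0 : R) (s : seq T) := \big[Order.max/z0]_(c <- s) F c.

Lemma bmax_ub z0 s c : c \in s -> F c <= bmax z0 s.
Proof.
elim: s => //= e s IH; rewrite /bmax big_cons inE => /orP[/eqP->|cs].
  by rewrite le_max lexx.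
by rewrite le_max (IH cs) orbT.
Qed.

Lemma bmax_ge z0 s : z0 <= bmax z0 s.
Proof.
elim: s => [|e s IH]; first by rewrite /bmax big_nil.
by rewrite /bmax big_cons le_max -/(bmax z0 s) IH orbT.
Qed.

Lemma bmax_att z0 s : bmax z0 s = z0 \/ exists2 c, c \in s & bmax z0 s = F c.
Proof.
elim: s => [|e s IH]; first by left; rewrite /bmax big_nil.
rewrite /bmax big_cons -/(bmax z0 s).
have [h|h] := leP (F e) (bmax z0 s).
  case: IH => [->|[c cs ->]]; first by left.
  by right; exists c => //; rewrite inE cs orbT.
by right; exists e => //; rewrite inE eqxx.
Qed.
End bmax.


Section phi.
Variable G : {fset 'rV[R]_d}.
Variable b0 : 'rV[R]_d.
Hypothesis b0G : b0 \in G.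

Definition phi x := bmax (fun b => ell b x) (ell b0 x) G.

Lemma phi_ub c x : c \in G -> ell c x <= phi x.
Proof. exact: (bmax_ub (fun b => ell b x)). Qed.

Lemma phi_att x : exists2 c, c \in G & phi x = ell c x.
Proof.
rewrite /phi; case: (bmax_att (fun b => ell b x) (ell b0 x) G) => [->|[c cG ->]].
  by exists b0.
by exists c.
Qed.

Lemma phi_le_sqnorm x : phi x <= sqnorm x.
Proof. by have [c _ ->] := phi_att x; exact: ell_le_sqnorm. Qed.

Lemma phi_ge x : ell b0 x <= phi x.
Proof. exact: phi_ub. Qed.

Lemma phi_bound x : `|phi x| <= 3 * sqnorm x + 3 * sqnorm b0.
Proof.
have h1 := phi_le_sqnorm x; have h2 := phi_ge x; have h3 := ell_bound b0 x.
have h4 := sqnorm_ge0 x; have h5 := sqnorm_ge0 b0.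
rewrite ler_norml; move: h3; rewrite ler_norml => /andP[h3 h6].
apply/andP; split; lra.
Qed.

Lemma nearestE c x : c \in G ->
  (forall e, e \in G -> sqdist x c <= sqdist x e) <-> phi x <= ell c x.
Proof.
move=> cG; split.
  move=> H; have [e eG ->] := phi_att x; have := H e eG.
  rewrite !sqdistE; lra.
move=> H e eG; have := @phi_ub e x eG; rewrite !sqdistE; lra.
Qed.

Lemma dist2E x : dist2 G x = (sqnorm x - phi x)%:E.
Proof.
have [c cG ec] := phi_att x.
have nc : forall e, e \in G -> sqdist x c <= sqdist x e.
  by apply/nearestE => //; rewrite ec.
apply/eqP; rewrite eq_le; apply/andP; split.
  apply: ereal_inf_lbound; exists c => //; rewrite sqdistE ec //.
apply: le_ereal_inf_tmp => _ [e eG <-]; rewrite lee_fin; have := @phi_ub e x eG; rewrite !sqdistE; lra.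
Qed.

Lemma dist2_near c x : c \in G ->
  (forall e, e \in G -> sqdist x c <= sqdist x e) -> dist2 G x = (sqdist x c)%:E.
Proof.
move=> cG H; rewrite dist2E; congr EFin.
have := (@nearestE c x cG).1 H; have := @phi_ub c x cG; rewrite sqdistE; lra.
Qed.

Lemma phi_convex : convex_function setT phi.
Proof.
move=> t x y _ _; rewrite /conv /=.
rewrite [X in _ <= X](_ : _ = t%:num * phi x + (1 - t%:num) * phi y) //.
have -> : unstable.onem t%:num = 1 - t%:num by [].
have [c cG ->] := phi_att (t%:num *: x + (1 - t%:num) *: y).
rewrite ell_affine.
have := @phi_ub c x cG; have := @phi_ub c y cG.
have t0 : 0 <= t%:num by [].
have t1 : t%:num <= 1 by exact: le1.
nra.
Qed.

End phi.
End Alg.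

Section Meas.
Variables (R : realType) (d : nat).
Local Notation T := (Rd R d).

Lemma cont_meas (f : 'rV[R]_d -> R) : continuous f -> measurable_fun [set: T] f.
Proof.
move=> cf; apply: (measurability _ (measurable_realfun.RGenOpens.measurableE R)).
move=> _ [_ [a [b ->] <-]]; rewrite setTI; apply: sub_sigma_algebra.
by move/continuousP: cf; apply; exact: interval_open.
Qed.

Section gen.
Context dX (X : measurableType dX).
Definition mrv (F : X -> 'rV[R]_d) := forall i, measurable_fun setT (fun x => F x ord0 i).

Lemma mrv_cst b : mrv (fun=> b).
Proof. by move=> i; exact: measurable_cst. Qed.

Lemma m_ip F H : mrv F -> mrv H -> measurable_fun setT (fun x => ip (F x) (H x)).
Proof. move=> mF mH; apply: measurable_sum => i; exact: measurable_funM. Qed.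

Lemma m_sqnorm F : mrv F -> measurable_fun setT (fun x => sqnorm (F x)).
Proof. move=> mF; apply: measurable_sum => i; exact: measurable_funX. Qed.

Lemma m_sqdist F H : mrv F -> mrv H -> measurable_fun setT (fun x => sqdist (F x) (H x)).
Proof.
move=> mF mH; apply: measurable_sum => i; apply: measurable_funX.
exact: measurable_funB.
Qed.

Lemma m_ell b F : mrv F -> measurable_fun setT (fun x => ell b (F x)).
Proof.
move=> mF; apply: measurable_funB; last exact: measurable_cst.
apply: measurable_funM; first exact: measurable_cst.
by apply: m_ip => //; exact: mrv_cst.
Qed.
End gen.

Lemma mrv_id : mrv (fun x : T => (x : 'rV[R]_d)).
Proof. move=> i; apply: cont_meas; exact: coord_continuous. Qed.

Lemma mrv_comp (p : T -> T) : measurable_fun setT p -> mrv (fun x => (p x : 'rV[R]_d)).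
Proof.
move=> mp i; apply: (measurableT_comp (f := fun y : T => (y : 'rV[R]_d) ord0 i)) => //.
exact: mrv_id.
Qed.

Lemma m_phi (G : {fset 'rV[R]_d}) b0 : measurable_fun [set: T] (phi G b0).
Proof.
rewrite /phi /bmax; elim: (enum_fset G) => [|e s IH].
  under eq_fun do rewrite big_nil; exact: m_ell mrv_id.
under eq_fun do rewrite big_cons.
exact: (measurable_maxr (m_ell e mrv_id) IH).
Qed.

Lemma meas_le (f g : T -> R) : measurable_fun setT f -> measurable_fun setT g ->
  measurable [set x | f x <= g x].
Proof.
move=> mf mg.
rewrite (_ : [set x | f x <= g x] = setT `&` ((g \- f) @^-1` `[0, +oo[%classic)).
  exact: (measurable_funB mg mf measurableT (measurable_itv _)).
apply/seteqP; split => x /=.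
  by move=> h; split => //; rewrite in_itv /= andbT subr_ge0.
by case=> _; rewrite in_itv /= andbT subr_ge0.
Qed.

Lemma meas_lt (f g : T -> R) : measurable_fun setT f -> measurable_fun setT g ->
  measurable [set x | f x < g x].
Proof.
move=> mf mg.
rewrite (_ : [set x | f x < g x] = setT `&` ((g \- f) @^-1` `]0, +oo[%classic)).
  exact: (measurable_funB mg mf measurableT (measurable_itv _)).
apply/seteqP; split => x /=.
  by move=> h; split => //; rewrite in_itv /= andbT subr_gt0.
by case=> _; rewrite in_itv /= andbT subr_gt0.
Qed.

End Meas.

Section Integ.
Variables (R : realType) (d : nat).
Local Notation T := (Rd R d).
Variable mu : probability T R.
Implicit Types f g : T -> R.

Definition Iq (f : T -> R) := mu.-integrable setT (EFin \o f).
Definition Int (f : T -> R) := fine (\int[mu]_x (f x)%:E)%E.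

Lemma IntE f : Iq f -> (\int[mu]_x (f x)%:E = (Int f)%:E)%E.
Proof. by move=> h; rewrite /Int fineK //; exact: integrable_fin_num. Qed.

Lemma Iq_meas f : Iq f -> measurable_fun setT f.
Proof. by move=> /integrableP[/measurable_EFinP h _]. Qed.

Lemma IqD f g : Iq f -> Iq g -> Iq (fun x => f x + g x).
Proof.
move=> hf hg; apply: eq_integrable (integrableD _ hf hg) => //;
try by move=> x _ /=; rewrite EFinD.
Qed.

Lemma IqZ k f : Iq f -> Iq (fun x => k * f x).
Proof.
move=> hf; apply: eq_integrable (integrableZl _ k hf) => //;
try by move=> x _ /=; rewrite EFinM.
Qed.

Lemma IqN f : Iq f -> Iq (fun x => - f x).
Proof.
move=> hf; apply: eq_integrable (IqZ (-1) hf) => //; try by move=> x _ /=; rewrite mulN1r.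
Qed.

Lemma IqB f g : Iq f -> Iq g -> Iq (fun x => f x - g x).
Proof. by move=> hf hg; exact: IqD hf (IqN hg). Qed.

Lemma Iq_cst c : Iq (fun=> c).
Proof. exact: finite_measure_integrable_cst. Qed.

Lemma Iq_le f g : measurable_fun setT f -> (forall x, `|f x| <= `|g x|) -> Iq g -> Iq f.
Proof.
move=> mf h hg; apply: le_integrable hg => //.
  exact/measurable_EFinP.
by move=> x _ /=; rewrite lee_fin.
Qed.

Lemma Iq_bdd f c : measurable_fun setT f -> (forall x, `|f x| <= c) -> Iq f.
Proof.
move=> mf h; apply: (Iq_le mf _ (Iq_cst c)) => x.
exact: le_trans (h x) (ler_norm _).
Qed.

Lemma IntD f g : Iq f -> Iq g -> Int (fun x => f x + g x) = Int f + Int g.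
Proof.
move=> hf hg; apply: EFin_inj; rewrite -IntE ?EFinD -?IntE //; last exact: IqD.
rewrite -(integralD_EFin measurableT hf hg).
by apply: eq_integral => x _ /=; rewrite EFinD.
Qed.

Lemma IntZ k f : Iq f -> Int (fun x => k * f x) = k * Int f.
Proof.
move=> hf; apply: EFin_inj; rewrite -IntE ?EFinM -?IntE //; last exact: IqZ.
rewrite -(integralZl measurableT hf).
by apply: eq_integral => x _ /=; rewrite EFinM.
Qed.

Lemma IntN f : Iq f -> Int (fun x => - f x) = - Int f.
Proof.
move=> hf; rewrite -mulN1r -IntZ //; congr Int; apply: funext => x; by rewrite mulN1r.
Qed.

Lemma IntB f g : Iq f -> Iq g -> Int (fun x => f x - g x) = Int f - Int g.
Proof. by move=> hf hg; rewrite IntD ?IntN //; exact: IqN. Qed.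

Lemma Int_cst c : Int (fun=> c) = c.
Proof.
rewrite /Int (_ : (fun x => _) = cst c%:E) // integral_cst //.
rewrite [X in fine (_ * X)](_ : _ = 1%E); last exact: probability_setT.
by rewrite mule1.
Qed.

Lemma Iq_indic (A : set T) : measurable A -> Iq (\1_A).
Proof.
move=> mA; apply: (Iq_bdd (c := 1)); first exact: measurable_indic.
by move=> x; rewrite indicE; case: (x \in A); rewrite ?normr1 ?normr0.
Qed.

Lemma Int_indic (A : set T) : measurable A -> Int (\1_A) = fine (mu A).
Proof. by move=> mA; rewrite /Int integral_indic // setIT. Qed.

Lemma Int_le f g : Iq f -> Iq g -> (forall x, f x <= g x) -> Int f <= Int g.
Proof.
move=> hf hg h; rewrite -lee_fin -!IntE //; apply: le_integral => // x _.
by rewrite lee_fin.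
Qed.

Lemma Int_ext f g : (forall x, f x = g x) -> Int f = Int g.
Proof. by move=> h; congr Int; apply: funext. Qed.

Lemma Iq_ext f g : (forall x, f x = g x) -> Iq f -> Iq g.
Proof. by move=> h; rewrite (_ : f = g) //; apply: funext. Qed.

Lemma Iq_sum (I : Type) (s : seq I) (F : I -> T -> R) :
  (forall i, Iq (F i)) -> Iq (fun x => \sum_(i <- s) F i x).
Proof.
move=> h; elim: s => [|i s IH].
  by apply: Iq_ext (Iq_cst 0) => x; rewrite big_nil.
by apply: Iq_ext (IqD (h i) IH) => x; rewrite big_cons.
Qed.

Lemma Int_sum (I : Type) (s : seq I) (F : I -> T -> R) :
  (forall i, Iq (F i)) -> Int (fun x => \sum_(i <- s) F i x) = \sum_(i <- s) Int (F i).
Proof.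
move=> h; elim: s => [|i s IH].
  by rewrite big_nil -[RHS](Int_cst 0); apply: Int_ext => x; rewrite big_nil.
rewrite big_cons -IH -IntD //; last exact: Iq_sum.
by apply: Int_ext => x; rewrite big_cons.
Qed.

Hypothesis fsm : finite_second_moment mu.

Lemma Iq_sqnorm : Iq (fun x => sqnorm x).
Proof.
apply/integrableP; split.
  by apply/measurable_EFinP; exact: (m_sqnorm (@mrv_id R d)).
under eq_integral do rewrite /= ger0_norm ?sqnorm_ge0 //.
exact: fsm.
Qed.

Lemma Iq_quad f c : measurable_fun setT f -> (forall x, `|f x| <= c * (1 + sqnorm x)) -> Iq f.
Proof.
move=> mf h; apply: (Iq_le mf (g := fun x => c * (1 + sqnorm x))).
  by move=> x; exact: le_trans (h x) (ler_norm _).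
by apply: IqZ; apply: IqD; [exact: Iq_cst | exact: Iq_sqnorm].
Qed.

End Integ.

Section Stat.
Variables (R : realType) (d : nat).
Local Notation T := (Rd R d).

Lemma abs_le1sq (r : R) : `|r| <= 1 + r ^+ 2.
Proof.
rewrite -(real_normK (num_real r)); have := normr_ge0 r; nra.
Qed.

Lemma coord_bound (x : 'rV[R]_d) i (c : R) :
  `|x ord0 i - c| <= (1 + `|c|) * (1 + sqnorm x).
Proof.
have h1 := coord_le_sqnorm x i; have h2 := abs_le1sq (x ord0 i).
have h3 := sqnorm_ge0 x; have h4 := normr_ge0 c.
apply: (le_trans (ler_normB _ _)); nra.
Qed.

Lemma indic_abs (A : set T) (r : R) x : `|\1_A x * r| <= `|r|.
Proof.
by rewrite indicE; case: (x \in A); rewrite ?mul1r ?mul0r ?normr0 // normr_ge0.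
Qed.

Variable mu : probability T R.
Hypothesis fsm : finite_second_moment mu.

Lemma Iq_phi (G : {fset 'rV[R]_d}) b0 : b0 \in G -> Iq mu (phi G b0).
Proof.
move=> b0G; apply: (Iq_quad fsm (c := 3 + 3 * sqnorm b0)); first exact: m_phi.
move=> x; have := phi_bound b0G x; have := sqnorm_ge0 x; have := sqnorm_ge0 b0.
nra.
Qed.

Lemma Iq_S : Iq mu (fun x => sqnorm x).
Proof. exact: Iq_sqnorm. Qed.

Lemma Iq_Sphi (G : {fset 'rV[R]_d}) b0 : b0 \in G ->
  Iq mu (fun x => sqnorm x - phi G b0 x).
Proof. by move=> b0G; apply: IqB; [exact: Iq_S|exact: Iq_phi]. Qed.

Lemma distortionE (G : {fset 'rV[R]_d}) b0 : b0 \in G ->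
  distortion mu G = (Int mu (fun x => sqnorm x - phi G b0 x))%:E.
Proof.
move=> b0G; rewrite /distortion -IntE; last exact: Iq_Sphi.
by apply: eq_integral => x _; rewrite (dist2E b0G).
Qed.

Lemma Iq_coord (A : set T) i c : measurable A ->
  Iq mu (fun x => \1_A x * (x ord0 i - c)).
Proof.
move=> mA; apply: (Iq_quad fsm (c := 1 + `|c|)).
  apply: measurable_funM; first exact: measurable_indic.
  by apply: measurable_funB; [exact: mrv_id|exact: measurable_cst].
move=> x; exact: le_trans (indic_abs _ _ _) (coord_bound _ _ _).
Qed.

Definition shift (a : 'rV[R]_d) (i : 'I_d) (m : R) : 'rV[R]_d :=
  \row_j (a ord0 j + (if j == i then m else 0)).

Lemma sqdist_shift (x a : 'rV[R]_d) i m :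
  sqdist x (shift a i m) - sqdist x a = m ^+ 2 - 2 * m * (x ord0 i - a ord0 i).
Proof.
rewrite /sqdist -sumrB (bigD1 i) //= big1 => [|j ji].
  by rewrite !mxE eqxx; ring.
by rewrite !mxE (negbTE ji) addr0 subrr.
Qed.

Variable N : nat.
Variable G : {fset 'rV[R]_d}.
Hypothesis Gopt : opt_quantizer mu N G.

Lemma stationary (a : 'rV[R]_d) (aG : a \in G) (C : set T) (mC : measurable C)
  (HC : forall x, C x -> forall e, e \in G -> sqdist x a <= sqdist x e)
  (HnC : forall x, ~ C x -> exists2 b, (b \in G) && (b != a) &
          forall e, e \in G -> sqdist x b <= sqdist x e)
  (i : 'I_d) : Int mu (fun x => \1_C x * (x ord0 i - a ord0 i)) = 0.
Proof.
set m := Int mu _.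
pose a' := shift a i m.
pose G1 := (a' |` (G `\ a))%fset.
have a'G1 : a' \in G1 by rewrite !inE eqxx.
have cardG1 : (#|` G1| <= N)%N.
  apply: leq_trans (proj1 Gopt); rewrite cardfsU1 [X in (_ <= X)%N](cardfsD1 a) aG.
  by case: (_ \notin _).
have hopt := proj2 Gopt G1 cardG1.
rewrite (distortionE aG) (distortionE a'G1) lee_fin in hopt.
pose g x := sqnorm x - phi G a x + \1_C x * (sqdist x a' - sqdist x a).
have Ih : Iq mu (fun x => \1_C x * (sqdist x a' - sqdist x a)).
  have := IqB (IqZ (m ^+ 2) (Iq_indic mu mC)) (IqZ (2 * m) (Iq_coord i (a ord0 i) mC)).
  apply: Iq_ext => x /=; rewrite sqdist_shift; ring.
have Ig : Iq mu g by exact: IqD (Iq_Sphi aG) Ih.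
have h2 : Int mu (fun x => sqnorm x - phi G1 a' x) <= Int mu g.
  apply: Int_le; [exact: Iq_Sphi|exact: Ig|] => x.
  rewrite /g -lee_fin -(dist2E a'G1).
  have [Cx|nCx] := pselect (C x).
    have -> : \1_C x = 1 :> R by rewrite indicE mem_set.
    have := dist2_near aG aG (HC x Cx); rewrite (dist2E aG) => -[->].
    rewrite mul1r addrCA subrr addr0.
    by apply: ereal_inf_lbound; exists a'.
  have -> : \1_C x = 0 :> R by rewrite indicE memNset.
  have [b /andP[bG ba] Hb] := HnC x nCx.
  rewrite mul0r addr0; have := dist2_near aG bG Hb; rewrite (dist2E aG) => -[->].
  apply: ereal_inf_lbound; exists b => //=. rewrite !inE ba bG orbT //.
have e3 : Int mu g = Int mu (fun x => sqnorm x - phi G a x) + (m ^+ 2 * fine (mu C) - 2 * m * m).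
  rewrite /g (IntD (Iq_Sphi aG) Ih); congr (_ + _).
  rewrite (@Int_ext _ _ mu _ (fun x => m ^+ 2 * \1_C x - 2 * m * (\1_C x * (x ord0 i - a ord0 i)))); last first.
    by move=> x; rewrite sqdist_shift; ring.
  rewrite (IntB (IqZ _ (Iq_indic mu mC)) (IqZ _ (Iq_coord i (a ord0 i) mC))).
  by rewrite (IntZ _ (Iq_indic mu mC)) (IntZ _ (Iq_coord i _ mC)) (Int_indic mu mC).
have muC1 : fine (mu C) <= 1.
  have := probability_le1 mu mC; have := measure_ge0 mu C.
  by case: (mu C) => // r; rewrite !lee_fin.
have muC0 : 0 <= fine (mu C) by apply: fine_ge0; exact: measure_ge0.
have : 0 <= m ^+ 2 * (fine (mu C) - 2) by move: hopt h2; rewrite e3; lra.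
move=> h; apply/eqP; rewrite -sqrf_eq0 eq_le sqr_ge0 andbT.
nra.
Qed.

End Stat.

Section Cells.
Variables (R : realType) (d : nat).
Local Notation T := (Rd R d).
Variable G : {fset 'rV[R]_d}.
Variable p : T -> T.
Hypothesis mp : measurable_fun setT p.
Hypothesis np : nearest_proj G p.

Definition cell (a : 'rV[R]_d) : set T := [set x | p x = a].

Lemma m_cell a : measurable (cell a).
Proof.
rewrite (_ : cell a = [set x | sqdist (p x : 'rV[R]_d) a <= 0]).
  apply: meas_le; last exact: measurable_cst.
  by apply: m_sqdist; [exact: mrv_comp|exact: mrv_cst].
apply/seteqP; split => x /=.
  by rewrite /cell /= => ->; rewrite sqdistxx.
by move=> h; apply: sqdist_eq0; apply/eqP; rewrite eq_le h sqdist_ge0.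
Qed.

Lemma pG x : p x \in G. Proof. exact: (np x).1. Qed.
Lemma pnear x e : e \in G -> sqdist x (p x) <= sqdist x e. Proof. exact: (np x).2. Qed.

Lemma sum_cells (g : 'rV[R]_d -> R) x :
  \sum_(a <- G) \1_(cell a) x * g a = g (p x).
Proof.
rewrite (bigD1_seq (p x)) ?fset_uniq ?pG //= big1 => [|a ap].
  by rewrite indicE mem_set // mul1r addr0.
rewrite indicE memNset ?mul0r //; rewrite /cell /= => h.
by move: ap; rewrite h eqxx.
Qed.

Lemma meas_in (s : seq 'rV[R]_d) : measurable [set x | p x \in s].
Proof.
elim: s => [|b s IH].
  by rewrite (_ : [set x | _] = set0) //; apply/seteqP; split => x //=.
rewrite (_ : [set x | _] = cell b `|` [set x | p x \in s]).
  exact: measurableU (m_cell b) IH.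
apply/seteqP; split => x /=; rewrite inE.
  by case/orP => [/eqP h|h]; [left|right].
by case => [h|h]; rewrite ?/cell/= ?h ?eqxx ?orbT.
Qed.

Lemma partition (m : {measure set T -> \bar R}) (A : set T) : measurable A ->
  m A = (\sum_(b <- G) m (A `&` cell b))%E.
Proof.
move=> mA.
suff H : forall s : seq 'rV[R]_d, uniq s ->
    m (A `&` [set x | p x \in s]) = (\sum_(b <- s) m (A `&` cell b))%E.
  rewrite -H ?fset_uniq //; congr (m _); apply/seteqP; split => x /=.
    by move=> Ax; split => //; exact: pG.
  by case.
elim => [|b s IH] /=.
  by move=> _; rewrite big_nil (_ : _ `&` _ = set0) ?measure0 //; apply/seteqP; split => x //= [].
move=> /andP[bs us]; rewrite big_cons -IH //.
rewrite (_ : A `&` _ = (A `&` cell b) `|` (A `&` [set x | p x \in s])).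
  rewrite measureU //; [exact: measurableI (m_cell b)|exact: measurableI (meas_in s)|].
  apply/seteqP; split => x //= [[_ h1] [_ h2]].
  by move: bs; rewrite -h1 h2.
apply/seteqP; split => x /=.
  by case=> Ax; rewrite inE => /orP[/eqP h|h]; [left|right].
by case=> -[Ax h]; split => //; rewrite inE; [rewrite h eqxx|rewrite h orbT].
Qed.

End Cells.

Section Main1.
Variables (R : realType) (d : nat).
Local Notation T := (Rd R d).
Variable mu : probability T R.
Hypothesis fsm : finite_second_moment mu.
Variables (N : nat) (G : {fset 'rV[R]_d}).
Hypothesis Gopt : opt_quantizer mu N G.
Variable p : T -> T.
Hypothesis mp : measurable_fun setT p.
Hypothesis np : nearest_proj G p.

Let a0 : 'rV[R]_d := p 0.
Let a0G : a0 \in G. Proof. exact: pG. Qed.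

Lemma phi_p x : phi G a0 x = ell (p x) x.
Proof.
apply/eqP; rewrite eq_le phi_ub ?(pG np) // andbT.
by apply/(nearestE a0G x (pG np x)) => e eG; exact: pnear.
Qed.

Lemma phi_onG y : y \in G -> phi G a0 y = sqnorm y.
Proof.
move=> yG; apply/eqP; rewrite eq_le phi_le_sqnorm //=.
by rewrite -{1}(ell_self y) phi_ub.
Qed.

Lemma Iq_Sp : Iq mu (fun x => sqnorm (p x)).
Proof.
apply: (@Iq_bdd _ _ mu _ (\sum_(b <- G) sqnorm b)).
  exact: m_sqnorm (mrv_comp mp).
move=> x; rewrite ger0_norm ?sqnorm_ge0 // -(sum_cells np (fun b => sqnorm b) x).
apply: ler_sum => b _; rewrite indicE.
by case: (x \in _); rewrite ?mul1r ?mul0r ?sqnorm_ge0.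
Qed.

Lemma Int_phi : Int mu (phi G a0) = Int mu (fun x => sqnorm (p x)).
Proof.
pose F (i : 'I_d) (a : 'rV[R]_d) x := a ord0 i * (\1_(cell p a) x * (x ord0 i - a ord0 i)).
have IF : forall i a, Iq mu (F i a).
  by move=> i a; apply: IqZ; apply: Iq_coord => //; exact: m_cell.
have IF2 : forall i, Iq mu (fun x => \sum_(a <- G) F i a x).
  by move=> i; exact: Iq_sum.
rewrite (@Int_ext _ _ mu _ (fun x => sqnorm (p x) + 2 * \sum_(i <- index_enum 'I_d) \sum_(a <- G) F i a x)).
  rewrite IntD; [|exact: Iq_Sp|by apply: IqZ; exact: Iq_sum].
  rewrite IntZ; last exact: Iq_sum.
  rewrite (@Int_sum _ _ mu _ _ (fun i x => \sum_(a <- G) F i a x) IF2) big1 ?mulr0 ?addr0 // => i _.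
  rewrite (@Int_sum _ _ mu _ _ (F i) (IF i)) big1_seq // => a /= aG.
  rewrite /F IntZ; last by apply: Iq_coord => //; exact: m_cell.
  rewrite (stationary fsm Gopt aG (m_cell mp a)) ?mulr0 //.
    by move=> x; rewrite /cell /= => <- e eG; exact: pnear.
  move=> x; rewrite /cell /= => /eqP pxa; exists (p x); last by move=> e eG; exact: pnear.
  by rewrite (pG np) pxa.
move=> x; rewrite phi_p.
under eq_bigr do (under eq_bigr do rewrite /F mulrCA; rewrite (sum_cells np (fun a => a ord0 _ * (x ord0 _ - a ord0 _)) x)).
rewrite /ell /ip /sqnorm !mulr_sumr -!sumrB -big_split /=.
by apply: eq_bigr => i _; ring.
Qed.

End Main1.

Section Cvx.
Variables (R : realType) (d : nat).

Lemma cvxP (f : 'rV[R]_d -> R) :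
  (forall (t : R) x y, 0 <= t -> t <= 1 ->
     f (t *: x + (1 - t) *: y) <= t * f x + (1 - t) * f y) ->
  convex_function setT f.
Proof.
move=> H t x y _ _; rewrite /conv /=.
rewrite [X in _ <= X](_ : _ = t%:num * f x + (1 - t%:num) * f y) //.
have -> : unstable.onem t%:num = 1 - t%:num by [].
by apply: H => //; exact: le1.
Qed.

Lemma sqnorm_convex : convex_function setT (fun x : 'rV[R]_d => sqnorm x).
Proof.
apply: cvxP => t x y t0 t1; rewrite /sqnorm !mulr_sumr -big_split /=.
apply: ler_sum => i _; rewrite !mxE /=.
have : 0 <= t * (1 - t) * (x ord0 i - y ord0 i) ^+ 2.
  by apply: mulr_ge0; [apply: mulr_ge0; lra|exact: sqr_ge0].
nra.
Qed.

Lemma phi_cvx (G : {fset 'rV[R]_d}) b0 (b0G : b0 \in G) (t : R) x y :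
  0 <= t -> t <= 1 ->
  phi G b0 (t *: x + (1 - t) *: y) <= t * phi G b0 x + (1 - t) * phi G b0 y.
Proof.
move=> t0 t1; have [c cG ->] := phi_att b0G (t *: x + (1 - t) *: y).
rewrite ell_affine; have := phi_ub b0 x cG; have := phi_ub b0 y cG.
nra.
Qed.

Definition psi (G : {fset 'rV[R]_d}) b0 a (e : R) x := Order.max (phi G b0 x) (ell a x + e).

Lemma psi_convex G b0 (b0G : b0 \in G) a e : convex_function setT (psi G b0 a e).
Proof.
apply: cvxP => t x y t0 t1; rewrite /psi ge_max; apply/andP; split.
  apply: le_trans (phi_cvx b0G x y t0 t1) _.
  by apply: lerD; apply: ler_wpM2l; rewrite ?le_max ?lexx //; lra.
rewrite ell_affine.
have h1 : ell a x + e <= Order.max (phi G b0 x) (ell a x + e) by rewrite le_max lexx orbT.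
have h2 : ell a y + e <= Order.max (phi G b0 y) (ell a y + e) by rewrite le_max lexx orbT.
nra.
Qed.

End Cvx.


Lemma prob_fin (R : realType) (d : nat) (m : probability (Rd R d) R) (A : set (Rd R d)) :
  measurable A -> m A = (fine (m A))%:E.
Proof.
move=> mA; rewrite fineK // ge0_fin_numE ?measure_ge0 //.
by apply: le_lt_trans (probability_le1 m mA) _; rewrite ltry.
Qed.

Lemma prob_fine_ge0 (R : realType) (d : nat) (m : probability (Rd R d) R) (A : set (Rd R d)) :
  0 <= fine (m A).
Proof. by apply: fine_ge0; exact: measure_ge0. Qed.

Lemma ip2_identity (R : realType) (d : nat) (x a b : 'rV[R]_d) :
  2 * \sum_(i < d) (a ord0 i - b ord0 i) * (x ord0 i - b ord0 i) =
  sqdist x b - sqdist x a + sqdist a b.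
Proof.
rewrite /sqdist mulr_sumr -sumrB -big_split /=; apply: eq_bigr => i _; ring.
Qed.

Lemma max_abs (R : realType) (u v : R) : `|Order.max u v| <= `|u| + `|v|.
Proof.
have := normr_ge0 u; have := normr_ge0 v.
by case: (leP u v) => _ h1 h2; rewrite ?lerDr ?lerDl.
Qed.

Lemma indic_in (R : realType) (T : Type) (A : set T) x : A x -> \1_A x = 1 :> R.
Proof. by move=> h; rewrite indicE mem_set. Qed.

Lemma indic_out (R : realType) (T : Type) (A : set T) x : ~ A x -> \1_A x = 0 :> R.
Proof. by move=> h; rewrite indicE memNset. Qed.
Arguments indic_in {R T A x} _.
Arguments indic_out {R T A x} _.

Lemma dist2_0 (R : realType) (d : nat) (x : 'rV[R]_d) : dist2 fset0 x = +oo%E.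
Proof.
apply/eqP; rewrite eq_le leey /=.
by apply: le_ereal_inf_tmp => y [c] /=; rewrite inE.
Qed.

Section Main2.
Variables (R : realType) (d : nat).
Local Notation T := (Rd R d).
Variable mu : probability T R.
Hypothesis fsm : finite_second_moment mu.
Variables (N : nat) (G : {fset 'rV[R]_d}).
Hypothesis Gopt : opt_quantizer mu N G.
Variable p : T -> T.
Hypothesis mp : measurable_fun setT p.
Hypothesis np : nearest_proj G p.
Variable nu : probability T R.
Hypothesis H1 : cvx_le (pushforward mu p) nu.
Hypothesis H2 : cvx_le nu mu.

Let a0 : 'rV[R]_d := p 0.
Let a0G : a0 \in G. Proof. exact: pG. Qed.

Lemma fsm_nu : finite_second_moment nu.
Proof.
rewrite /finite_second_moment; apply: le_lt_trans (H2 (@sqnorm_convex R d)) _.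
exact: fsm.
Qed.

Lemma cvx_Int f : convex_function setT f -> Iq nu f -> Iq mu f -> Int nu f <= Int mu f.
Proof. by move=> cf h1 h2; rewrite -lee_fin -IntE // -IntE //; exact: H2. Qed.

Lemma key : Int nu (phi G a0) = Int mu (phi G a0).
Proof.
apply/eqP; rewrite eq_le cvx_Int ?phi_convex ?(Iq_phi fsm_nu a0G) ?(Iq_phi fsm a0G) //=.
rewrite (Int_phi fsm Gopt mp np) -lee_fin -(IntE (Iq_phi fsm_nu a0G)).
have := H1 (phi_convex a0G); rewrite (integral_pushforward mp) //; last first.
- rewrite preimage_setT; apply: (Iq_ext _ (Iq_Sp mu mp np)) => x /=.
  by rewrite phi_onG // (pG np).
- by apply/measurable_EFinP; exact: m_phi.
rewrite preimage_setT -(IntE (Iq_Sp mu mp np)).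
move=> h; apply: le_trans h; rewrite le_eqVlt; apply/orP; left; apply/eqP.
by apply: eq_integral => x _ /=; rewrite phi_onG // (pG np).
exact: phi_convex a0G.
Qed.

Lemma part1 : opt_quantizer nu N G.
Proof.
split; first exact: (proj1 Gopt).
move=> G' cG'; case: (fset_0Vmem G') => [->|[b' b'G']].
  rewrite [X in (_ <= X)%E](_ : _ = +oo%E) ?leey //.
  rewrite /distortion (_ : (fun x => dist2 fset0 x) = cst +oo%E); last first.
    by apply: funext => x; exact: dist2_0.
  rewrite integral_cst // [X in (_ * X)%E](_ : _ = 1%E) ?mule1 //.
  exact: probability_setT.
rewrite (distortionE fsm_nu a0G) (distortionE fsm_nu b'G') lee_fin.
have hG := proj2 Gopt G' cG'.
rewrite (distortionE fsm a0G) (distortionE fsm b'G') lee_fin in hG.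
rewrite (IntB (Iq_S fsm) (Iq_phi fsm a0G)) (IntB (Iq_S fsm) (Iq_phi fsm b'G')) in hG.
rewrite (IntB (Iq_S fsm_nu) (Iq_phi fsm_nu a0G)) (IntB (Iq_S fsm_nu) (Iq_phi fsm_nu b'G')).
have c' := cvx_Int (phi_convex b'G') (Iq_phi fsm_nu b'G') (Iq_phi fsm b'G').
have k := key.
lra.
Qed.


Let K a := [set x : T | phi G a0 x <= ell a x].
Let U a e := [set x : T | phi G a0 x < ell a x + e].

Let mK a : measurable (K a).
Proof. by apply: meas_le; [exact: m_phi|exact: (m_ell a (@mrv_id R d))]. Qed.

Let mU a e : measurable (U a e).
Proof.
apply: meas_lt; first exact: m_phi.
by apply: measurable_funD; [exact: (m_ell a (@mrv_id R d))|exact: measurable_cst].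
Qed.

Let cellK a : cell p a `<=` K a.
Proof. by move=> x; rewrite /cell /K /= => <-; rewrite phi_p. Qed.

Lemma muK a : a \in G -> mu (K a) = mu (cell p a).
Proof.
move=> aG.
rewrite (partition mp np mu (mK a)) (bigD1_seq a) ?fset_uniq //= big1_seq => [|b /andP[ba bG]].
  rewrite adde0; congr (mu _); apply/seteqP; split => x; first by case.
  by move=> h; split => //; exact: cellK.
pose D := K a `&` cell p b.
have mD : measurable D by apply: measurableI; [exact: mK|exact: m_cell].
have HC1 : forall x, cell p b x -> forall e, e \in G -> sqdist x b <= sqdist x e.
  by move=> x; rewrite /cell /= => <- e eG; exact: pnear.
have HnC1 : forall x, ~ cell p b x -> exists2 c, (c \in G) && (c != b) &
    forall e, e \in G -> sqdist x c <= sqdist x e.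
  move=> x h; exists (p x); last by move=> e eG; exact: pnear.
  by rewrite (pG np) /=; apply/eqP.
have HC2 : forall x, (cell p b `\` K a) x -> forall e, e \in G -> sqdist x b <= sqdist x e.
  by move=> x [h _]; exact: HC1.
have HnC2 : forall x, ~ (cell p b `\` K a) x -> exists2 c, (c \in G) && (c != b) &
    forall e, e \in G -> sqdist x c <= sqdist x e.
  move=> x h; have [pxb|pxb] := pselect (cell p b x); last exact: HnC1.
  have Kx : K a x by apply: contra_notP h => nK; split.
  exists a; first by rewrite aG eq_sym.
  exact/(nearestE a0G x aG).
have h3 : forall i, Int mu (fun x => \1_D x * (x ord0 i - b ord0 i)) = 0.
  move=> i.
  have s1 := stationary fsm Gopt bG (m_cell mp b) HC1 HnC1 i.
  have s2 := stationary fsm Gopt bG (measurableD (m_cell mp b) (mK a)) HC2 HnC2 i.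
  rewrite (@Int_ext _ _ mu _ (fun x => \1_(cell p b) x * (x ord0 i - b ord0 i)
      - \1_(cell p b `\` K a) x * (x ord0 i - b ord0 i))).
    rewrite IntB ?s1 ?s2 ?subrr //.
      by apply: Iq_coord => //; exact: m_cell.
    by apply: Iq_coord => //; apply: measurableD => //; exact: m_cell.
  move=> x; have [Kx|nKx] := pselect (K a x); have [Cx|nCx] := pselect (cell p b x).
  - have Dx : D x by split.
    have nE : ~ (cell p b `\` K a) x by case.
    by rewrite (indic_in Dx) (indic_in Cx) (indic_out nE); ring.
  - have nD : ~ D x by case.
    have nE : ~ (cell p b `\` K a) x by case.
    by rewrite (indic_out nD) (indic_out nCx) (indic_out nE); ring.
  - have nD : ~ D x by case.
    have E : (cell p b `\` K a) x by split.
    by rewrite (indic_out nD) (indic_in Cx) (indic_in E); ring.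
  - have nD : ~ D x by case.
    have nE : ~ (cell p b `\` K a) x by case.
    by rewrite (indic_out nD) (indic_out nCx) (indic_out nE); ring.
have h4 : Int mu (fun x => (sqdist a b / 2) * \1_D x) = 0.
  rewrite (@Int_ext _ _ mu _ (fun x => \sum_(i <- index_enum 'I_d)
      (a ord0 i - b ord0 i) * (\1_D x * (x ord0 i - b ord0 i)))).
    rewrite Int_sum; last by move=> i; apply: IqZ; exact: Iq_coord.
    rewrite big1 // => i _; rewrite IntZ ?h3 ?mulr0 //; exact: Iq_coord.
  move=> x; have [Dx|nDx] := pselect (D x).
    rewrite (indic_in Dx) mulr1.
    under eq_bigr do rewrite mul1r.
    case: Dx => Kx Cx.
    have e1 : sqdist x b <= sqdist x a by move: Cx; rewrite /cell /= => <-; exact: pnear.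
    have e2 : sqdist x a <= sqdist x b by exact: (nearestE a0G x aG).2 Kx b bG.
    apply: (@mulfI _ 2); first by rewrite pnatr_eq0.
    rewrite -/(\sum_(i < d) _) ip2_identity; lra.
  by rewrite (indic_out nDx) mulr0 big1 // => i _; rewrite mul0r mulr0.
rewrite IntZ in h4; last exact: Iq_indic.
rewrite Int_indic // in h4.
have sab : sqdist a b / 2 != 0.
  rewrite mulf_eq0 invr_eq0 pnatr_eq0 orbF; apply/negP => /eqP /sqdist_eq0 ab.
  by move: ba; rewrite ab eqxx.
move/eqP: h4; rewrite mulf_eq0 (negbTE sab) /= fine_eq0; first by move/eqP.
by rewrite (prob_fin mu mD).
Qed.


Lemma Iq_psi (m : probability T R) (fm : finite_second_moment m) a e :
  Iq m (psi G a0 a e).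
Proof.
apply: (Iq_quad fm (c := 5 + 3 * sqnorm a0 + 3 * sqnorm a + `|e|)).
  apply: (measurable_maxr (m_phi G a0)).
  by apply: measurable_funD; [exact: (m_ell a (@mrv_id R d))|exact: measurable_cst].
move=> x; apply: le_trans (max_abs _ _) _.
have h1 := phi_bound a0G x; have h2 := ell_bound a x.
have h3 := ler_normD (ell a x) e.
have := sqnorm_ge0 x; have := sqnorm_ge0 a0; have := sqnorm_ge0 a; have := normr_ge0 e.
nra.
Qed.

Lemma nuK_le a e : a \in G -> 0 < e -> fine (nu (K a)) <= fine (mu (U a e)).
Proof.
move=> aG e0.
have I1 := Iq_psi fsm_nu a e; have I2 := Iq_psi fsm a e.
have c1 : Int nu (fun x => phi G a0 x + e * \1_(K a) x) <= Int nu (psi G a0 a e).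
  apply: Int_le => //; first exact: (IqD (Iq_phi fsm_nu a0G) (IqZ e (Iq_indic nu (mK a)))).
  move=> x; rewrite /psi; have [Kx|nKx] := pselect (K a x).
    rewrite (indic_in Kx) mulr1 le_max; apply/orP; right; rewrite lerD2r; exact: Kx.
  by rewrite (indic_out nKx) mulr0 addr0 le_max lexx.
have c2 := cvx_Int (psi_convex a0G a e) I1 I2.
have c3 : Int mu (psi G a0 a e) <= Int mu (fun x => phi G a0 x + e * \1_(U a e) x).
  apply: Int_le => //; first exact: (IqD (Iq_phi fsm a0G) (IqZ e (Iq_indic mu (mU a e)))).
  move=> x; rewrite /psi ge_max; have [Ux|nUx] := pselect (U a e x).
    rewrite (indic_in Ux) mulr1 lerDl (ltW e0) /= lerD2r; exact: phi_ub.
  rewrite (indic_out nUx) mulr0 addr0 lexx /= leNgt; exact/negP.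
rewrite (IntD (Iq_phi fsm_nu a0G) (IqZ e (Iq_indic nu (mK a)))) in c1.
rewrite (IntD (Iq_phi fsm a0G) (IqZ e (Iq_indic mu (mU a e)))) in c3.
rewrite (IntZ e (Iq_indic nu (mK a))) in c1.
rewrite (IntZ e (Iq_indic mu (mU a e))) in c3.
rewrite (Int_indic nu (mK a)) in c1.
rewrite (Int_indic mu (mU a e)) in c3.
have k := key.
have : e * fine (nu (K a)) <= e * fine (mu (U a e)) by lra.
by rewrite ler_pM2l.
Qed.

Lemma nuK_muK a : a \in G -> (nu (K a) <= mu (K a))%E.
Proof.
move=> aG.
pose F n := U a (n.+1%:R^-1).
have mF n : measurable (F n) by exact: mU.
have capF : \bigcap_n F n = K a.
  apply/seteqP; split => x /=.
    move=> h; rewrite /K /= leNgt; apply/negP => lt.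
    set del := phi G a0 x - ell a x.
    have del0 : 0 < del by rewrite subr_gt0.
    have := h (Num.trunc del^-1) I; rewrite /F /U /=.
    have h1 := truncnS_gt del^-1.
    have h2 : (Num.trunc del^-1).+1%:R^-1 < del.
      rewrite invf_plt ?posrE //; exact: ltr0Sn.
    move=> h3; have e : del = phi G a0 x - ell a x by []. move: ((Num.trunc del^-1).+1%:R^-1) h2 h3 => r h2 h3. clear h1. clearbody del. lra.
  move=> Kx n _; rewrite /F /U /=; apply: le_lt_trans Kx _.
  by rewrite ltrDl invr_gt0 ltr0Sn.
have niF : nonincreasing_seq F.
  move=> m n mn; apply/subsetPset => x; rewrite /F /U /= => h.
  apply: lt_le_trans h _; rewrite lerD2l lef_pV2 ?posrE ?ltr0Sn // ler_nat.
  by rewrite ltnS.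
have cv := @nonincreasing_cvg_mu _ _ _ mu F.
have cv' : (mu \o F) @ \oo --> mu (K a).
  rewrite -capF; apply: cv => //.
  - by apply: (le_lt_trans (probability_le1 mu (mF 0%N))); rewrite ltry.
  - by rewrite capF; exact: mK.
rewrite -(cvg_lim _ cv') //; apply: lime_ge; first by apply/cvg_ex; eexists; exact: cv'.
apply: nearW => n /=.
rewrite (prob_fin nu (mK a)) (prob_fin mu (mF n)) lee_fin.
by apply: nuK_le => //; rewrite invr_gt0 ltr0Sn.
Qed.

Lemma cells_eq a : a \in G -> nu (cell p a) = mu (cell p a).
Proof.
have le_each : forall b, b \in G -> fine (nu (cell p b)) <= fine (mu (cell p b)).
  move=> b bG; rewrite -lee_fin -!prob_fin; try exact: m_cell.
  rewrite -(muK bG); apply: (le_trans _ (nuK_muK bG)).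
  apply: le_measure; rewrite ?inE; [exact: m_cell|exact: mK|exact: cellK].
have sumE (m : probability T R) : \sum_(b <- G) fine (m (cell p b)) = 1.
  apply: EFin_inj; rewrite -sumEFin.
  rewrite (eq_bigr (fun b => m (setT `&` cell p b))); last first.
    by move=> b _; rewrite setTI -prob_fin //; exact: m_cell.
  by rewrite -partition //; exact: probability_setT.
have h0 : \sum_(b <- G | b \in G) (fine (mu (cell p b)) - fine (nu (cell p b))) == 0.
  by rewrite -big_seq sumrB !sumE subrr.
rewrite psumr_eq0 in h0; last by move=> b bG; rewrite subr_ge0; apply: le_each.
move=> aG; move/allP: h0 => /(_ a aG) /=; rewrite aG /= subr_eq0 => /eqP h.
by rewrite (prob_fin nu (m_cell mp a)) (prob_fin mu (m_cell mp a)) h.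
Qed.

Lemma part2 (A : set T) : measurable A -> pushforward nu p A = pushforward mu p A.
Proof.
move=> mA; rewrite /pushforward.
have mpA : measurable (p @^-1` A) by rewrite -[_ @^-1` _]setTI; exact: mp.
rewrite (partition mp np nu mpA) (partition mp np mu mpA); apply: eq_big_seq => b bG.
have [Ab|nAb] := pselect (A b).
  rewrite (_ : _ `&` _ = cell p b); first exact: cells_eq.
  by apply/seteqP; split => x /=; [case|rewrite /cell /= => h; split => //; rewrite h].
rewrite (_ : _ `&` _ = set0) ?measure0 //.
by apply/seteqP; split => x //= [h1 h2]; apply: nAb; rewrite -h2.
Qed.

End Main2.

Theorem corollary1 (R : realType) (d N : nat)
  (mu : probability (Rd R d) R) (G : {fset 'rV[R]_d})
  (p : Rd R d -> Rd R d) (nu : probability (Rd R d) R) :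
  finite_second_moment mu ->
  (1 <= N)%N ->
  opt_quantizer mu N G ->
  measurable_fun setT p ->
  nearest_proj G p ->
  cvx_le (pushforward mu p) nu ->
  cvx_le nu mu ->
  opt_quantizer nu N G /\
  (forall A : set (Rd R d), measurable A ->
     pushforward nu p A = pushforward mu p A).
Proof.
move=> fsm _ Gopt mp np H1 H2; split.
  exact: (part1 fsm Gopt mp np H1 H2).
by move=> A mA; exact: (part2 fsm Gopt mp np H1 H2 mA).
Qed.
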